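(* Let $G$ be a finite group and $p$ a prime. Then \[ \chi(\mathcal F^*_G)=|G|^{-1}\sum_{x\in G}\chi(\mathcal S^*_{C_G(x)}). \]
   Context: $\mathcal F^*_G$ is the category whose objects are the nonidentity $p$-subgroups of $G$, with $\mathcal F^*_G(H,K)=C_G(H)\backslash N_G(H,K)$, $N_G(H,K)=\{g\in G:g^{-1}Hg\le K\}$, composition induced by multiplication. For a finite group $X$, $\mathcal S^*_X$ is the poset of nonidentity $p$-subgroups of $X$ under inclusion. $\chi$ is Leinster's Euler characteristic: for a finite category $\mathcal C$, a weighting is $k^\bullet$ with $\sum_b|\mathcal C(a,b)|k^b=1$ for all $a$, a coweighting is $k_\bullet$ with $\sum_ak_a|\mathcal C(a,b)|=1$ for all $b$, and if both exist $\chi(\mathcal C)=\sum_bk^b=\sum_ak_a$ (for a finite poset, the sum of all values of the Möbius function; $0$ if empty). *)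

(* Defs.v *)
From HB Require Import structures.
From mathcomp Require Import all_boot all_order all_algebra all_fingroup all_solvable.
From Stdlib Require Import ClassicalEpsilon.
Set Implicit Arguments. Unset Strict Implicit. Unset Printing Implicit Defensive.
Import GRing.Theory.
Local Open Scope ring_scope.

(* A finite category is presented by its (finite) set of objects O inside a
   finType T and the cardinalities h a b = |C(a,b)| of its hom-sets. *)

Definition is_weighting (T : finType) (O : {set T}) (h : T -> T -> nat)
  (k : T -> rat) : Prop :=
  forall a, a \in O -> \sum_(b in O) (h a b)%:R * k b = 1.

Definition is_coweighting (T : finType) (O : {set T}) (h : T -> T -> nat)
  (k : T -> rat) : Prop :=
  forall b, b \in O -> \sum_(a in O) k a * (h a b)%:R = 1.

Definition has_euler_char (T : finType) (O : {set T}) (h : T -> T -> nat) : Prop :=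
  (exists k, is_weighting O h k) /\ (exists k, is_coweighting O h k).

(* c is the Euler characteristic: chi exists and every weighting sums to c
   (equivalently every coweighting does). *)
Definition euler_char_is (T : finType) (O : {set T}) (h : T -> T -> nat)
  (c : rat) : Prop :=
  has_euler_char O h /\ forall k, is_weighting O h k -> \sum_(b in O) k b = c.

Definition euler_char (T : finType) (O : {set T}) (h : T -> T -> nat) : rat :=
  epsilon (inhabits 0) (fun c => euler_char_is O h c).

Local Open Scope group_scope.

Definition nontriv_psubgroups (gT : finGroupType) (p : nat) (X : {set gT})
  : {set {set gT}} :=
  [set H : {set gT} | [&& group_set H, H \subset X, p.-group H & H != 1]].

(* hom counts of the poset S*_X (inclusion) *)
Definition incl_hom (gT : finGroupType) (H K : {set gT}) : nat := H \subset K.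

Definition transp (gT : finGroupType) (G H K : {set gT}) : {set gT} :=
  [set g in G | H :^ g \subset K].

(* |F*_G(H,K)| = |C_G(H) \ N_G(H,K)| (orbits C_G(H) g of left multiplication) *)
Definition frob_hom (gT : finGroupType) (G : {set gT}) (H K : {set gT}) : nat :=
  #|rcosets 'C_G(H) (transp G H K)|.

(* Main.v *)
Require Import Defs.
From mathcomp Require Import all_boot all_order all_algebra all_fingroup all_solvable.
From Stdlib Require Import ClassicalEpsilon.
From mathcomp Require Import ring.
Import GRing.Theory Num.Theory.

Section Helpers.
Local Open Scope ring_scope.

Lemma triang (T : finType) (r : rel T) (f : T -> nat) (g : T -> rat) :
  (forall a, r a a) -> (forall a b, r a b -> a != b -> (f a < f b)%N) ->
  forall O : {set T}, exists k : T -> rat,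
    forall a, a \in O -> \sum_(b in O) (r a b)%:R * k b = g a.
Proof.
move=> rr rf O.
elim: {O}_.+1 {-2}O (ltnSn #|O|) => // n IH O leO.
case: (set_0Vmem O) => [->|[m0 m0O]].
  by exists (fun _ => 0) => a; rewrite inE.
case: (arg_minnP f m0O) => m mO0 minm.
have mO : m \in O := mO0.
have /IH [k' Hk'] : (#|O :\ m| < n)%N.
  by move: leO; rewrite (cardsD1 m O) mO.
exists (fun b => if b == m then g m - \sum_(c in O :\ m) (r m c)%:R * k' c else k' b).
move=> a aO; rewrite (bigD1 m) //= eqxx.
have E : \sum_(i in O | i != m) (r a i)%:R *
     (if i == m then g m - \sum_(c in O :\ m) (r m c)%:R * k' c else k' i)
   = \sum_(i in O :\ m) (r a i)%:R * k' i.
  rewrite [RHS]big_mkcond [LHS]big_mkcond; apply: eq_bigr => i _.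
  by rewrite !inE; case: (i =P m) => //= _; case: (i \in O).
rewrite E; case: (a =P m) => [->|/eqP am].
  by rewrite rr mul1r subrK.
have -> : r a m = false.
  apply/negbTE/negP => ram; have := rf _ _ ram am.
  by rewrite ltnNge minm.
rewrite mul0r add0r Hk' // !inE am.
by [].
Qed.

Lemma weight_subset (gT : finType) (O : {set {set gT}}) (g : {set gT} -> rat) :
  exists k, forall a, a \in O -> \sum_(b in O) (a \subset b)%:R * k b = g a.
Proof.
have H (a b : {set gT}) : a \subset b -> a != b -> (#|a| < #|b|)%N.
  by move=> ab nab; apply: proper_card; rewrite properEneq nab.
exact: (@triang {set gT} (fun a b : {set gT} => a \subset b) (fun a : {set gT} => #|a|) g (fun a => subxx a) H O).
Qed.

Lemma coweight_subset (gT : finType) (O : {set {set gT}}) (g : {set gT} -> rat) :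
  exists k, forall a, a \in O -> \sum_(b in O) (b \subset a)%:R * k b = g a.
Proof.
have H (a b : {set gT}) : b \subset a -> a != b -> (#|~: a| < #|~: b|)%N.
  move=> ab nab; apply: proper_card; rewrite properEneq setCS ab andbT.
  by apply: contra nab => /eqP/setC_inj ->.
exact: (@triang {set gT} (fun a b : {set gT} => b \subset a) (fun a : {set gT} => #|~: a|) g (fun a => subxx a) H O).
Qed.

Lemma euler_char_eq (T : finType) (O : {set T}) h c :
  euler_char_is O h c -> euler_char O h = c.
Proof.
move=> Hc; rewrite /euler_char.
have [[[k Hk] _] Hs] := Hc.
have := epsilon_spec (inhabits 0) (fun c => euler_char_is O h c) (ex_intro _ c Hc).
by case=> _ Hs'; rewrite -(Hs' k Hk) (Hs k Hk).
Qed.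

Lemma char_from (T : finType) (O : {set T}) h k k' :
  is_weighting O h k -> is_coweighting O h k' ->
  euler_char_is O h (\sum_(a in O) k' a).
Proof.
move=> Hk Hk'; split; first by split; [exists k | exists k'].
move=> w Hw.
rewrite (eq_bigr (fun b => (\sum_(a in O) k' a * (h a b)%:R) * w b)); last first.
  by move=> b bO; rewrite Hk' ?mul1r.
rewrite (eq_bigr (fun b => \sum_(a in O) k' a * ((h a b)%:R * w b))); last first.
  by move=> b _; rewrite mulr_suml; apply: eq_bigr => a _; rewrite mulrA.
rewrite exchange_big /=; apply: eq_bigr => a aO.
by rewrite -mulr_sumr Hw ?mulr1.
Qed.

Lemma rcosets_partition_mulA (gT : finGroupType) (A : {set gT}) (H : {group gT}) :
  partition (rcosets H A) (H * A)%g.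
Proof.
set HG := (H * A)%g; have sGHG: {subset A <= HG} by apply/subsetP/mulG_subr.
have defHx x: x \in HG -> [set y in HG | rcoset H x == rcoset H y] = (H :* x)%g.
  move=> HGx; apply/setP=> y; rewrite inE !rcosetE (sameP eqP rcoset_eqP).
  by rewrite rcoset_sym; apply/andb_idl/subsetP; rewrite mulGS sub1set.
have:= preim_partitionP (rcoset H) HG; congr (partition _ _); apply/setP=> Hx.
apply/imsetP/idP=> [[x HGx ->] | ]; first by rewrite defHx // mem_rcosets.
by case/rcosetsP=> x /sGHG-HGx ->; exists x; rewrite ?defHx.
Qed.

Lemma card_rcosets_stable (gT : finGroupType) (A : {set gT}) (H : {group gT}) :
  (H * A \subset A)%g -> #|A| = (#|rcosets H A| * #|H|)%N.
Proof.
move=> sHA; have eHA : (H * A)%g = A by apply/eqP; rewrite eqEsubset sHA mulG_subr.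
have := @rcosets_partition_mulA _ A H; rewrite eHA => P.
apply: (card_uniform_partition _ P) => _ /rcosetsP[x _ ->]; exact: card_rcoset.
Qed.

End Helpers.

Section Main.
Local Open Scope ring_scope.

Lemma main_aux (gT : finGroupType) (G : {group gT}) (p : nat) :
  prime p ->
  has_euler_char (nontriv_psubgroups p G) (frob_hom G) /\
  euler_char (nontriv_psubgroups p G) (frob_hom G) =
    ((#|G|%:R)^-1 * \sum_(x in G)
        euler_char (nontriv_psubgroups p 'C_G[x]%g) (@incl_hom gT))%R.
Proof.
move=> pp.
set O := nontriv_psubgroups p G.
have inO (H : {set gT}) :
  (H \in O) = [&& group_set H, H \subset G, (p.-group H)%g & H != 1%g] by rewrite inE.
have conjO (H : {set gT}) g : H \in O -> g \in G -> (H :^ g)%g \in O.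
  move=> HO gG; move: HO.
  by rewrite !inO group_setJ conjsg_eq1 /pgroup cardJg sub_conjg (conjGid (groupVr gG)).
have cardCJ (H : {set gT}) g : g \in G -> #|'C_G(H :^ g)%g| = #|'C_G(H)%g|.
  by move=> gG; rewrite centJ -{1}(conjGid gG) -conjIg cardJg.
have G0 : (#|G|%:R : rat) != 0 by rewrite pnatr_eq0 -lt0n cardG_gt0.
have C0 (H : {set gT}) : (#|'C_G(H)%g|%:R : rat) != 0.
  by rewrite pnatr_eq0 -lt0n (cardG_gt0 ('C_G(H))%G).
have transpE (H K : {set gT}) :
    (#|transp G H K|%:R : rat) = \sum_(g in G) ((H :^ g)%g \subset K)%:R.
  rewrite -sum1_card natr_sum [RHS]big_mkcond [LHS]big_mkcond.
  apply: eq_bigr => g _; rewrite inE.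
  by case: (g \in G); case: ((H :^ g)%g \subset K).
have frobE (H K : {set gT}) :
    ((frob_hom G H K)%:R : rat) = #|transp G H K|%:R / #|'C_G(H)%g|%:R.
  rewrite /frob_hom (@card_rcosets_stable _ (transp G H K) ('C_G(H))%G).
    by rewrite natrM mulfK ?C0.
  apply/subsetP => _ /mulsgP[c t cC tT ->].
  move: tT; rewrite !inE => /andP[tG sHK].
  have cG : c \in G := subsetP (subsetIl _ _) c cC.
  have cN : c \in 'N(H)%g := subsetP (cent_sub H) c (subsetP (subsetIr _ _) c cC).
  by rewrite groupM //= conjsgM (normP cN).
have [c Hc] := @coweight_subset _ O (fun _ => 1).
have [k Hk] := @weight_subset _ O (fun H => #|'C_G(H)%g|%:R / #|G|%:R).
set kF := fun H : {set gT} => #|'C_G(H)%g|%:R / #|G|%:R * c H.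
have wF : is_weighting O (frob_hom G) k.
  move=> H HO.
  rewrite (eq_bigr (fun K : {set gT} => (#|'C_G(H)%g|%:R)^-1 *
       \sum_(g in G) (((H :^ g)%g \subset K)%:R * k K))); last first.
    by move=> K _; rewrite frobE transpE -mulr_suml; ring.
  rewrite -mulr_sumr exchange_big /=.
  rewrite (eq_bigr (fun g => #|'C_G(H)%g|%:R / #|G|%:R)); last first.
    by move=> g gG; rewrite Hk ?conjO // cardCJ.
  rewrite sumr_const -mulr_natr; field.
  by rewrite G0 C0.
have cwF : is_coweighting O (frob_hom G) kF.
  move=> K KO.
  rewrite (eq_bigr (fun H : {set gT} => (#|G|%:R)^-1 *
       \sum_(g in G) (((H :^ g)%g \subset K)%:R * c H))); last first.
    move=> H _; rewrite /kF frobE transpE -mulr_suml; field.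
    by rewrite G0 C0.
  rewrite -mulr_sumr exchange_big /=.
  rewrite (eq_bigr (fun g => 1)); last first.
    move=> g gG; apply: etrans (Hc _ (conjO _ _ KO (groupVr gG))).
    by apply: eq_bigr => H _; rewrite sub_conjg.
  rewrite sumr_const -mulr_natr; field.
  by rewrite G0.
have hF : has_euler_char O (frob_hom G) by split; [exists k | exists kF].
split=> //.
rewrite (@euler_char_eq _ _ _ _ (@char_from _ _ _ _ _ wF cwF)).
have Ex x : x \in G -> euler_char (nontriv_psubgroups p 'C_G[x]%g) (@incl_hom gT)
   = \sum_(H in O) (if x \in 'C(H)%g then c H else 0).
  move=> xG; set Ox := nontriv_psubgroups p 'C_G[x]%g.
  have OxO (H : {set gT}) : (H \in Ox) = (H \in O) && (H \subset 'C_G[x]%g).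
    rewrite !inE; case sH: (H \subset 'C_G[x]%g).
      by rewrite (subset_trans sH (subsetIl _ _)) andbT.
    case sHG: (H \subset G); last by rewrite !andbF.
    by move: sH; rewrite subsetI sHG /= => _; rewrite !andbF.
  have [kx Hkx] := @weight_subset _ Ox (fun _ => 1).
  have cwx : is_coweighting Ox (@incl_hom gT) c.
    move=> K KO; have := KO; rewrite OxO => /andP[KO' sK].
    apply: etrans (Hc K KO'); rewrite [RHS]big_mkcond [LHS]big_mkcond.
    apply: eq_bigr => H _; rewrite OxO /incl_hom.
    case: (H \in O) => //=; case sHK: (H \subset K) => /=.
      by rewrite (subset_trans sHK sK) mulr1 mul1r.
    by case: (H \subset _); rewrite ?mulr0 ?mul0r.
  rewrite (@euler_char_eq _ _ _ _ (@char_from _ _ _ _ _ Hkx cwx)).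
  rewrite big_mkcond [RHS]big_mkcond; apply: eq_bigr => H _.
  rewrite OxO; case HO: (H \in O) => //=.
  move: HO; rewrite inO => /and4P[_ sHG _ _].
  by rewrite subsetI sHG /= sub_cent1.
rewrite (eq_bigr _ Ex) exchange_big /= mulr_sumr.
apply: eq_bigr => H HO.
rewrite -big_mkcondr (eq_bigl (fun x => x \in 'C_G(H)%g)); last first.
  by move=> x; rewrite inE.
by rewrite sumr_const /kF -[c H *+ _]mulr_natl mulrA [_^-1 * _]mulrC.
Qed.

End Main.

Theorem proposition5p3 (gT : finGroupType) (G : {group gT}) (p : nat) :
  prime p ->
  has_euler_char (nontriv_psubgroups p G) (frob_hom G) /\
  euler_char (nontriv_psubgroups p G) (frob_hom G) =
    ((#|G|%:R)^-1 * \sum_(x in G)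
        euler_char (nontriv_psubgroups p 'C_G[x]%g) (@incl_hom gT))%R.
Proof. exact: main_aux. Qed.
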